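(* Let $\rho,\sigma$ be retractable contracts with $\rho$ compliant with $\sigma$. Then one of the following holds: (1) $\rho=\mathbf 1$; (2) $\rho=\sum_{i\in I}\alpha_i.\rho_i$ and $\sigma=\sum_{j\in J}\bar\alpha_j.\sigma_j$ (retractable choices) and there exists $k\in I\cap J$ such that $\rho_k$ is compliant with $\sigma_k$; (3) $\rho=\bigoplus_{i\in I}\bar a_i.\rho_i$, $\sigma=\sum_{j\in J}a_j.\sigma_j$, $I\subseteq J$, and $\rho_k$ is compliant with $\sigma_k$ for all $k\in I$; (4) $\rho=\sum_{i\in I}a_i.\rho_i$, $\sigma=\bigoplus_{j\in J}\bar a_j.\sigma_j$, $I\supseteq J$, and $\rho_k$ is compliant with $\sigma_k$ for all $k\in J$.
   Context: Let $\mathcal N$ be a countable set of names and $\overline{\mathcal N}=\{\bar a\mid a\in\mathcal N\}$ a disjoint set of conames; $\alpha$ ranges over $\mathcal N\cup\overline{\mathcal N}$, with $\bar{\bar a}=a$. Retractable contracts are the closed expressions generated by $\sigma ::= \mathbf 1 \mid \sum_{i\in I} a_i.\sigma_i \ (\text{input}) \mid \sum_{i\in I}\bar a_i.\sigma_i\ (\text{retractable output}) \mid \bigoplus_{i\in I}\bar a_i.\sigma_i\ (\text{unretractable output}) \mid x \mid \mathsf{rec}\,x.\sigma$, where $I$ is non-empty and finite, names/conames in each choice are pairwise distinct, and $\sigma$ is not a variable in $\mathsf{rec}\,x.\sigma$. Choices are commutative; $\mathsf{rec}\,x.\sigma$ is identified with $\sigma[\mathsf{rec}\,x.\sigma/x]$.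 A unary $\bar a.\sigma$ may be read as either kind of output. Sums written $\sum$ are retractable choices (input or retractable output). Histories are stacks $\vec\gamma ::= [\,] \mid \vec\gamma:\sigma$ with $\sigma$ a retractable contract or the special symbol $\circ$. A contract with history is a pair $\langle\vec\gamma,\sigma\rangle$ with $\sigma$ a contract or $\circ$. Transitions: $\langle\vec\gamma,\alpha.\sigma+\sigma'\rangle\xrightarrow{\alpha}\langle\vec\gamma:\sigma',\sigma\rangle$ (for retractable choices); $\langle\vec\gamma,\bar a.\sigma\oplus\sigma'\rangle\xrightarrow{\tau}\langle\vec\gamma,\bar a.\sigma\rangle$; $\langle\vec\gamma,\alpha.\sigma\rangle\xrightarrow{\alpha}\langle\vec\gamma:\circ,\sigma\rangle$; $\langle\vec\gamma:\sigma',\sigma\rangle\xrightarrow{\mathsf{rb}}\langle\vec\gamma,\sigma'\rangle$. Client/server pairs $\langle\vec\delta,\rho\rangle\parallel\langle\vec\gamma,\sigma\rangle$ reduce by: (comm) if $\langle\vec\delta,\rho\rangle\xrightarrow{\alpha}\langle\vec\delta',\rho'\rangle$ and $\langle\vec\gamma,\sigma\rangle\xrightarrow{\bar\alpha}\langle\vec\gamma',\sigma'\rangle$ then the pair reduces to $\langle\vec\delta',\rho'\rangle\parallel\langle\vec\gamma',\sigma'\rangle$; ($\tau$) a $\tau$-transition of either component alone; (rbk) if both components do an $\mathsf{rb}$ transition and $\rho\neq\mathbf 1$, both roll back simultaneously; rule (rbk) applies only if neither (comm) nor ($\tau$) applies. Then $\langle\vec\delta,\rho\rangle$ is compliant with $\langle\vec\gamma,\sigma\rangle$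 if whenever $\langle\vec\delta,\rho\rangle\parallel\langle\vec\gamma,\sigma\rangle$ reduces in finitely many steps to a pair $\langle\vec\delta',\rho'\rangle\parallel\langle\vec\gamma',\sigma'\rangle$ with no further reduction, we have $\rho'=\mathbf 1$. A contract $\rho$ is compliant with $\sigma$ if $\langle[\,],\rho\rangle$ is compliant with $\langle[\,],\sigma\rangle$. *)

(* Defs.v *)
From Stdlib Require Import List.
Import ListNotations.

(* Names are natural numbers; variables are natural numbers (named, not de Bruijn). *)
Inductive act : Type := Nm (a : nat) | CoNm (a : nat).

Definition dual (x : act) : act :=
  match x with Nm a => CoNm a | CoNm a => Nm a end.

(* A choice is a list of (name, continuation);
   CIn l      = sum_i a_i.s_i            (input, retractable)
   CROut l    = sum_i \bar a_i.s_i       (retractable output)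
   CUOut l    = (+)_i \bar a_i.s_i       (unretractable output) *)
Inductive ctr : Type :=
| COne : ctr
| CIn : list (nat * ctr) -> ctr
| CROut : list (nat * ctr) -> ctr
| CUOut : list (nat * ctr) -> ctr
| CVar : nat -> ctr
| CRec : nat -> ctr -> ctr.

(* Substitution of s for the free occurrences of x in t.  It is only used with
   s closed, so capture cannot happen. *)
Fixpoint subst (x : nat) (s : ctr) (t : ctr) : ctr :=
  match t with
  | COne => COne
  | CIn l => CIn (map (fun p => (fst p, subst x s (snd p))) l)
  | CROut l => CROut (map (fun p => (fst p, subst x s (snd p))) l)
  | CUOut l => CUOut (map (fun p => (fst p, subst x s (snd p))) l)
  | CVar y => if Nat.eqb x y then s else CVar y
  | CRec y b => if Nat.eqb x y then CRec y b else CRec y (subst x s b)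
  end.

Inductive wfu : list nat -> ctr -> Prop :=
| wf_one B : wfu B COne
| wf_in B l : l <> [] -> NoDup (map fst l) ->
    (forall a c, In (a, c) l -> wfu B c) -> wfu B (CIn l)
| wf_rout B l : l <> [] -> NoDup (map fst l) ->
    (forall a c, In (a, c) l -> wfu B c) -> wfu B (CROut l)
| wf_uout B l : l <> [] -> NoDup (map fst l) ->
    (forall a c, In (a, c) l -> wfu B c) -> wfu B (CUOut l)
| wf_var B x : In x B -> wfu B (CVar x)
| wf_rec B x s : (forall y, s <> CVar y) -> wfu (x :: B) s -> wfu B (CRec x s).

Definition contract (c : ctr) : Prop := wfu [] c.

(* Unf c c' : c' is the head form of c, obtained by unfolding rec x.s to
   s[rec x.s / x] until the head is not a rec (rec x.s is identified with its
   unfolding). *)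
Inductive Unf : ctr -> ctr -> Prop :=
| unf_one : Unf COne COne
| unf_in l : Unf (CIn l) (CIn l)
| unf_rout l : Unf (CROut l) (CROut l)
| unf_uout l : Unf (CUOut l) (CUOut l)
| unf_rec x s c' : Unf (subst x (CRec x s) s) c' -> Unf (CRec x s) c'.

Definition is_one (c : ctr) : Prop := Unf c COne.

(* States: the current component is a contract or the symbol o (None). *)
Definition slot := option ctr.
Definition hist := list slot.          (* head of the list = top of the stack *)
Definition state := (hist * slot)%type.

Inductive lts : state -> act -> state -> Prop :=
| lts_in h c l1 a s l2 :
    Unf c (CIn (l1 ++ (a, s) :: l2)) -> l1 ++ l2 <> [] ->
    lts (h, Some c) (Nm a) (Some (CIn (l1 ++ l2)) :: h, Some s)
| lts_rout h c l1 a s l2 :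
    Unf c (CROut (l1 ++ (a, s) :: l2)) -> l1 ++ l2 <> [] ->
    lts (h, Some c) (CoNm a) (Some (CROut (l1 ++ l2)) :: h, Some s)
| lts_in1 h c a s :
    Unf c (CIn [(a, s)]) -> lts (h, Some c) (Nm a) (None :: h, Some s)
| lts_rout1 h c a s :
    Unf c (CROut [(a, s)]) -> lts (h, Some c) (CoNm a) (None :: h, Some s)
| lts_uout1 h c a s :
    Unf c (CUOut [(a, s)]) -> lts (h, Some c) (CoNm a) (None :: h, Some s).

Inductive tau : state -> state -> Prop :=
| tau_uout h c l1 a s l2 :
    Unf c (CUOut (l1 ++ (a, s) :: l2)) -> l1 ++ l2 <> [] ->
    tau (h, Some c) (h, Some (CUOut [(a, s)])).

Inductive rb : state -> state -> Prop :=
| rb_pop h g x : rb (g :: h, x) (h, g).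

Definition config := (state * state)%type.   (* client || server *)

Inductive red0 : config -> config -> Prop :=
| red_comm p p' q q' al :
    lts p al p' -> lts q (dual al) q' -> red0 (p, q) (p', q')
| red_tau_l p p' q : tau p p' -> red0 (p, q) (p', q)
| red_tau_r p q q' : tau q q' -> red0 (p, q) (p, q').

Definition slot_is_one (x : slot) : Prop :=
  match x with Some c => is_one c | None => False end.

Inductive red : config -> config -> Prop :=
| red_base C C' : red0 C C' -> red C C'
| red_rbk p p' q q' :
    rb p p' -> rb q q' -> ~ slot_is_one (snd p) ->
    (~ exists C', red0 (p, q) C') ->
    red (p, q) (p', q').

Inductive reds : config -> config -> Prop :=
| reds_refl C : reds C C
| reds_step C C' C'' : red C C' -> reds C' C'' -> reds C C''.

Definition compliant_st (p q : state) : Prop :=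
  forall p' q', reds (p, q) (p', q') -> (~ exists C, red (p', q') C) ->
    slot_is_one (snd p').

Definition compliant (rho sigma : ctr) : Prop :=
  compliant_st ([], Some rho) ([], Some sigma).

(* "c = sum_i alpha_i.c_i" (retractable choice, input or retractable output;
   a unary unretractable output may be read as a retractable one);
   L lists the (alpha_i, c_i). *)
Definition rsum (c : ctr) (L : list (act * ctr)) : Prop :=
  exists l,
    (Unf c (CIn l) /\ L = map (fun p => (Nm (fst p), snd p)) l) \/
    ((Unf c (CROut l) \/ (Unf c (CUOut l) /\ length l = 1)) /\
       L = map (fun p => (CoNm (fst p), snd p)) l).

Definition uout (c : ctr) (l : list (nat * ctr)) : Prop :=
  Unf c (CUOut l) \/ (Unf c (CROut l) /\ length l = 1).

Definition isum (c : ctr) (l : list (nat * ctr)) : Prop := Unf c (CIn l).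

(* Main.v *)
Require Import Defs.
From Stdlib Require Import List.
From Stdlib Require Import Classical Lia.
Import ListNotations.

Lemma Unf_det c k1 : Unf c k1 -> forall k2, Unf c k2 -> k1 = k2.
Proof. induction 1; intros k2 H2; inversion H2; subst; auto. Qed.

Lemma Unf_head c k : Unf c k -> match k with CVar _ => False | CRec _ _ => False | _ => True end.
Proof. induction 1; simpl; auto. Qed.

Ltac udet := repeat match goal with
  | H1 : Unf ?c ?k1, H2 : Unf ?c ?k2 |- _ =>
      tryif constr_eq k1 k2 then fail else
      (let E := fresh "E" in assert (E : k1 = k2) by (exact (Unf_det _ _ H1 _ H2));
       clear H2; try discriminate E; try (injection E; intros; subst))
  end.

Definition stuck (C : config) := ~ exists C', red C C'.
Definition bad (p q : state) := exists p' q', reds (p,q) (p',q') /\ stuck (p',q') /\ ~ slot_is_one (snd p').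

Lemma bad_nc p q : bad p q -> ~ compliant_st p q.
Proof. intros (p' & q' & R & S & N) Hc. apply N. eapply Hc; eauto. Qed.

Lemma nc_bad p q : ~ compliant_st p q -> bad p q.
Proof. intros H. unfold compliant_st in H.
 apply not_all_ex_not in H as [p' H]. apply not_all_ex_not in H as [q' H].
 apply imply_to_and in H as [R H]. apply imply_to_and in H as [S N].
 exists p', q'; auto. Qed.

Lemma reds_trans C1 C2 C3 : reds C1 C2 -> reds C2 C3 -> reds C1 C3.
Proof. induction 1; intros; auto. econstructor; eauto. Qed.

Lemma reds_bad p q p' q' : reds (p,q) (p',q') -> bad p' q' -> bad p q.
Proof. intros R (p2 & q2 & R2 & S & N). exists p2, q2; split; [eapply reds_trans; eauto|auto]. Qed.

Lemma red_bad p q p' q' : red (p,q) (p',q') -> bad p' q' -> bad p q.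
Proof. intros R; apply reds_bad. econstructor; [exact R| constructor]. Qed.

Lemma compl_red p q p' q' : compliant_st p q -> red (p,q) (p',q') -> compliant_st p' q'.
Proof. intros Hc R. destruct (classic (compliant_st p' q')) as [|N]; auto.
  exfalso. apply (bad_nc p q); auto. eapply red_bad; eauto. apply nc_bad; auto. Qed.

Lemma lts_Nm_rev {h c a q} : lts (h, Some c) (Nm a) q -> exists l s, Unf c (CIn l) /\ In (a,s) l.
Proof. intros H; inversion H; subst.
 - do 2 eexists; split; [eassumption|]. apply in_or_app; right; left; reflexivity.
 - do 2 eexists; split; [eassumption|]. left; reflexivity. Qed.

Lemma lts_CoNm_rev {h c a q} : lts (h, Some c) (CoNm a) q -> exists l s, (Unf c (CROut l) \/ Unf c (CUOut l)) /\ In (a,s) l.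
Proof. intros H; inversion H; subst.
 - do 2 eexists; split; [left; eassumption|]. apply in_or_app; right; left; reflexivity.
 - do 2 eexists; split; [left; eassumption|]. left; reflexivity.
 - do 2 eexists; split; [right; eassumption|]. left; reflexivity. Qed.

Lemma tau_inv {h x q} : tau (h,x) q -> exists c l1 a s l2, x = Some c /\ Unf c (CUOut (l1++(a,s)::l2)) /\ l1++l2 <> [] /\ q = (h, Some (CUOut [(a,s)])).
Proof. intro H; inversion H; subst. do 5 eexists; repeat split; eauto. Qed.

Lemma notau_single {h c a s q} : Unf c (CUOut [(a,s)]) -> ~ tau (h, Some c) q.
Proof. intros U T. apply tau_inv in T as (c' & l1 & a' & s' & l2 & E & U' & N & _).
  injection E; intros; subst. udet.
  destruct l1 as [|z l1]; simpl in *.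
  - destruct l2; simpl in *; [congruence|]. congruence.
  - destruct l1; simpl in *; congruence. Qed.

Lemma notau_head {h c k q} : Unf c k -> (forall l, k <> CUOut l) -> ~ tau (h, Some c) q.
Proof. intros U K T. apply tau_inv in T as (c' & l1 & a' & s' & l2 & E & U' & _).
  injection E; intros; subst. eapply K. eapply Unf_det; eauto. Qed.

Lemma notone {c k} : Unf c k -> k <> COne -> ~ slot_is_one (Some c).
Proof. simpl; unfold is_one; intros U K H. apply K; eapply Unf_det; eauto. Qed.

Lemma lts_in_fwd {h c l al q} : Unf c (CIn l) -> lts (h, Some c) al q -> exists a s, al = Nm a /\ In (a,s) l.
Proof. intros U H. destruct al as [a|a].
 - apply lts_Nm_rev in H as (l' & s & U' & I). udet. eauto.
 - apply lts_CoNm_rev in H as (l' & s & [U'|U'] & I); udet. Qed.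

Lemma lts_out_fwd {h c l al q} : (Unf c (CROut l) \/ Unf c (CUOut l)) -> lts (h, Some c) al q -> exists a s, al = CoNm a /\ In (a,s) l.
Proof. intros U H. destruct al as [a|a].
 - apply lts_Nm_rev in H as (l' & s & U' & I). destruct U; udet.
 - apply lts_CoNm_rev in H as (l' & s & [U'|U'] & I); destruct U; udet; eauto. Qed.

Lemma stuck_nil x y : (~ exists C', red0 (([],x),([],y)) C') -> stuck (([],x),([],y)).
Proof. intros N [C' R]. inversion R; subst.
 - apply N; eauto.
 - match goal with H : rb _ _ |- _ => inversion H end. Qed.

Lemma stuck_bad x y : ~ slot_is_one x -> (forall q, ~ tau ([],x) q) -> (forall q, ~ tau ([],y) q) ->
  (forall al p' q', lts ([],x) al p' -> lts ([],y) (dual al) q' -> False) -> bad ([],x) ([],y).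
Proof. intros N T1 T2 L. exists ([],x), ([],y). split; [constructor|split; auto].
  apply stuck_nil. intros [C' R]. inversion R; subst; first [solve [eapply L; eauto] | solve [eapply T1; eauto] | solve [eapply T2; eauto]]. Qed.

Lemma client_dead x y : ~ slot_is_one x -> (forall al p', ~ lts ([],x) al p') -> (forall q, ~ tau ([],x) q) -> bad ([],x) ([],y).
Proof. intros N L T.
 destruct (classic (exists q, tau ([],y) q)) as [[q Tq]|NT].
 - pose proof Tq as Tq'. apply tau_inv in Tq' as (c & l1 & a & s & l2 & -> & U & Ne & ->).
   eapply red_bad. apply red_base, red_tau_r, Tq.
   apply stuck_bad; auto. intros q' Tq'. eapply notau_single; [constructor|eauto].
   intros al p' q' H; exfalso; eapply L; eauto.
 - apply stuck_bad; auto. intros q Tq; apply NT; eauto. intros al p' q' H; exfalso; eapply L; eauto.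
Qed.

Lemma client_out x d : ~ slot_is_one x ->
  (forall al p', lts ([],x) al p' -> exists a, al = CoNm a /\ forall m s, Unf d (CIn m) -> ~ In (a,s) m) ->
  (forall q, ~ tau ([],x) q) -> bad ([],x) ([],Some d).
Proof. intros N L T.
 destruct (classic (exists q, tau ([],Some d) q)) as [[q Tq]|NT].
 - pose proof Tq as Tq'. apply tau_inv in Tq' as (c & l1 & a & s & l2 & E & U & Ne & ->). injection E; intros; subst.
   eapply red_bad. apply red_base, red_tau_r, Tq.
   apply stuck_bad; auto. intros q' Tq'. eapply notau_single; [constructor|eauto].
   intros al p' q' H1 H2. destruct (L _ _ H1) as [b [-> _]]. simpl in H2.
   apply lts_Nm_rev in H2 as (l' & s' & U' & _). inversion U'.
 - apply stuck_bad; auto. intros q Tq; apply NT; eauto.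
   intros al p' q' H1 H2. destruct (L _ _ H1) as [b [-> K]]. simpl in H2.
   apply lts_Nm_rev in H2 as (l' & s' & U' & I). eapply K; eauto.
Qed.

Lemma lts_lift {h x al h' y} H : lts (h,x) al (h',y) -> lts (h++H,x) al (h'++H,y).
Proof. intro L; inversion L; subst; simpl;
  [eapply lts_in|eapply lts_rout|eapply lts_in1|eapply lts_rout1|eapply lts_uout1]; eauto. Qed.

Lemma lts_rehist {h x al h' y} : lts (h,x) al (h',y) -> exists g, h' = g::h /\ forall k, lts (k,x) al (g::k,y).
Proof. intro L; inversion L; subst; eexists; split; try reflexivity; intro k;
  [eapply lts_in|eapply lts_rout|eapply lts_in1|eapply lts_rout1|eapply lts_uout1]; eauto. Qed.

Lemma tau_rehist {h x h' y} : tau (h,x) (h',y) -> h' = h /\ forall k, tau (k,x) (k,y).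
Proof. intro T; inversion T; subst; split; auto. intro k; eapply tau_uout; eauto. Qed.

Lemma rb_lift {h x h' x'} H : rb (h,x) (h',x') -> rb (h++H,x) (h'++H,x').
Proof. intro B; inversion B; subst; simpl; constructor. Qed.

Definition liftc (H1 H2 : hist) (C : config) : config :=
  match C with ((h1,x),(h2,y)) => ((h1++H1,x),(h2++H2,y)) end.

Lemma red0_lift H1 H2 C C' : red0 C C' -> red0 (liftc H1 H2 C) (liftc H1 H2 C').
Proof. destruct 1 as [[h1 x] [h1' x'] [h2 y] [h2' y'] al L1 L2 | [h1 x] [h1' x'] [h2 y] T | [h1 x] [h2 y] [h2' y'] T]; simpl.
 - eapply red_comm; apply lts_lift; eauto.
 - apply tau_rehist in T as [-> T]. apply red_tau_l. apply T.
 - apply tau_rehist in T as [-> T]. apply red_tau_r. apply T.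
Qed.

Lemma red0_unlift C C' : red0 C C' -> forall k1 k2, exists C'', red0 ((k1, snd (fst C)), (k2, snd (snd C))) C''.
Proof. destruct 1 as [[h1 x] [h1' x'] [h2 y] [h2' y'] al L1 L2 | [h1 x] [h1' x'] [h2 y] T | [h1 x] [h2 y] [h2' y'] T]; intros k1 k2; simpl.
 - apply lts_rehist in L1 as [g1 [_ L1]]. apply lts_rehist in L2 as [g2 [_ L2]]. eexists. eapply red_comm; eauto.
 - apply tau_rehist in T as [_ T]. eexists. apply red_tau_l. apply T.
 - apply tau_rehist in T as [_ T]. eexists. apply red_tau_r. apply T.
Qed.

Lemma red_lift H1 H2 C C' : red C C' -> red (liftc H1 H2 C) (liftc H1 H2 C').
Proof. destruct 1 as [C C' R | [h1 x] [h1' x'] [h2 y] [h2' y'] B1 B2 N NR].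
 - apply red_base, red0_lift, R.
 - simpl. apply red_rbk.
   + apply rb_lift; auto.
   + apply rb_lift; auto.
   + exact N.
   + intros [C' R]. apply NR. destruct (red0_unlift _ _ R h1 h2) as [C'' R'']. simpl in R''. eauto.
Qed.

Lemma reds_lift H1 H2 C C' : reds C C' -> reds (liftc H1 H2 C) (liftc H1 H2 C').
Proof. induction 1; econstructor; eauto using red_lift. Qed.

Definition eqlen (C : config) := length (fst (fst C)) = length (fst (snd C)).

Lemma lts_len {h x al h' y} : lts (h,x) al (h',y) -> length h' = S (length h).
Proof. intro L; inversion L; subst; reflexivity. Qed.

Lemma red_eqlen C C' : red C C' -> eqlen C -> eqlen C'.
Proof. destruct 1 as [C C' R | [h1 x] [h1' x'] [h2 y] [h2' y'] B1 B2 N NR]; unfold eqlen; simpl.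
 - destruct R as [[h1 x] [h1' x'] [h2 y] [h2' y'] al L1 L2 | [h1 x] [h1' x'] [h2 y] T | [h1 x] [h2 y] [h2' y'] T]; simpl; intro E.
   + apply lts_len in L1; apply lts_len in L2; lia.
   + apply tau_rehist in T as [-> _]; auto.
   + apply tau_rehist in T as [-> _]; auto.
 - intro E. inversion B1; inversion B2; subst; simpl in *; lia.
Qed.

Lemma reds_eqlen C C' : reds C C' -> eqlen C -> eqlen C'.
Proof. induction 1; eauto using red_eqlen. Qed.

Lemma lift_bad x y g1 g2 : bad ([],x) ([],y) -> reds (([g1],x),([g2],y)) (([],g1),([],g2)).
Proof. intros ([h1 x'] & [h2 y'] & R & S & N).
 assert (E : length h1 = length h2) by exact (reds_eqlen _ _ R eq_refl).
 assert (h1 = [] /\ h2 = []) as [-> ->].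
 { destruct h1 as [|a h1], h2 as [|b h2]; simpl in E; try discriminate; auto.
   exfalso. apply S. eexists. apply red_rbk; try constructor; auto.
   intros [C' R']. apply S. eexists. apply red_base. eauto. }
 apply reds_lift with (H1 := [g1]) (H2 := [g2]) in R. simpl in R.
 eapply reds_trans; [exact R|]. econstructor; [|constructor].
 apply red_rbk; try constructor; auto.
 intros [C' R']. destruct (red0_unlift _ _ R' [] []) as [C'' R'']. simpl in R''. apply S; eauto using red_base.
Qed.

Lemma step_in {c l a s} : Unf c (CIn l) -> In (a,s) l -> exists g, (forall h, lts (h, Some c) (Nm a) (g::h, Some s)) /\
  (g = None \/ exists l', g = Some (CIn l') /\ incl l' l /\ length l' < length l).
Proof. intros U I. apply in_split in I as (l1 & l2 & ->).
 destruct (l1 ++ l2) eqn:E.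
 - apply app_eq_nil in E as [-> ->]. exists None. split; auto. intro h. apply lts_in1. exact U.
 - exists (Some (CIn (l1++l2))). split.
   + intro h. apply lts_in; auto. rewrite E; discriminate.
   + right. exists (l1++l2). split; auto. split.
     * intros z Hz. apply in_app_or in Hz as [Hz|Hz]; apply in_or_app; simpl; auto.
     * rewrite !length_app; simpl; lia.
Qed.

Lemma step_rout {c l a s} : Unf c (CROut l) -> In (a,s) l -> exists g, (forall h, lts (h, Some c) (CoNm a) (g::h, Some s)) /\
  (g = None \/ exists l', g = Some (CROut l') /\ incl l' l /\ length l' < length l).
Proof. intros U I. apply in_split in I as (l1 & l2 & ->).
 destruct (l1 ++ l2) eqn:E.
 - apply app_eq_nil in E as [-> ->]. exists None. split; auto. intro h. apply lts_rout1. exact U.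
 - exists (Some (CROut (l1++l2))). split.
   + intro h. apply lts_rout; auto. rewrite E; discriminate.
   + right. exists (l1++l2). split; auto. split.
     * intros z Hz. apply in_app_or in Hz as [Hz|Hz]; apply in_or_app; simpl; auto.
     * rewrite !length_app; simpl; lia.
Qed.

Lemma dead_none y : bad ([],None) ([],y).
Proof. apply client_dead; [simpl; tauto| intros al p' H; inversion H| intros q H; inversion H]. Qed.

Lemma SC c l d a sk : Unf c (CIn l) -> (Unf d (CUOut [(a,sk)]) \/ Unf d (CROut [(a,sk)])) ->
  compliant_st ([],Some c) ([],Some d) -> exists rk, In (a,rk) l /\ compliant rk sk.
Proof. intros U Ud Hc.
 assert (Ld : forall h, lts (h, Some d) (CoNm a) (None::h, Some sk)) by (intro h; destruct Ud; [apply lts_uout1|apply lts_rout1]; auto).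
 destruct (classic (exists rk, In (a,rk) l)) as [[rk I]|NI].
 - exists rk; split; auto. destruct (classic (compliant rk sk)) as [|NC]; auto. exfalso.
   apply nc_bad in NC. destruct (step_in U I) as (g1 & L1 & G1).
   refine (bad_nc _ _ _ Hc).
   eapply red_bad. { apply red_base. eapply red_comm; [apply L1 | apply Ld]. }
   eapply reds_bad. { apply lift_bad; exact NC. }
   destruct G1 as [->|(l' & -> & _ & _)].
   + apply dead_none.
   + apply stuck_bad.
     * eapply notone; [apply unf_in|discriminate].
     * intro q; eapply notau_head; [apply unf_in|intros; discriminate].
     * intros q H; inversion H.
     * intros al p' q' _ H; inversion H.
 - exfalso. refine (bad_nc _ _ _ Hc). apply stuck_bad.
   + eapply notone; [exact U| discriminate].
   + intro q; eapply notau_head; [exact U| intros; discriminate].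
   + intro q; destruct Ud; [eapply notau_single; eauto | eapply notau_head; eauto; intros; discriminate].
   + intros al p' q' H1 H2. destruct (lts_in_fwd U H1) as (b & s & -> & Ib). simpl in H2.
     apply lts_CoNm_rev in H2 as (m & s' & Um & Im).
     destruct Ud, Um; udet; simpl in Im; destruct Im as [Eq|[]]; injection Eq; intros; subst; apply NI; eauto.
Qed.

Lemma CC c d a rk : (Unf c (CUOut [(a,rk)]) \/ Unf c (CROut [(a,rk)])) -> compliant_st ([],Some c) ([],Some d) ->
  exists m, Unf d (CIn m) /\ exists sk, In (a,sk) m /\ compliant rk sk.
Proof. intros Uc Hc.
 assert (Lc : forall h, lts (h, Some c) (CoNm a) (None::h, Some rk)) by (intro h; destruct Uc; [apply lts_uout1|apply lts_rout1]; auto).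
 assert (Nc : ~ slot_is_one (Some c)) by (destruct Uc; eapply notone; eauto; discriminate).
 assert (Tc : forall q, ~ tau ([], Some c) q) by (intro q; destruct Uc; [eapply notau_single; eauto| eapply notau_head; eauto; intros; discriminate]).
 destruct (classic (exists m sk, Unf d (CIn m) /\ In (a,sk) m)) as [(m & sk & Um & I)|NI].
 - exists m; split; auto. exists sk; split; auto.
   destruct (classic (compliant rk sk)) as [|NC]; auto. exfalso. apply nc_bad in NC.
   destruct (step_in Um I) as (g2 & L2 & G2).
   refine (bad_nc _ _ _ Hc).
   eapply red_bad. { apply red_base. eapply red_comm; [apply Lc | apply L2]. }
   eapply reds_bad. { apply lift_bad; exact NC. }
   apply dead_none.
 - exfalso. refine (bad_nc _ _ _ Hc). apply client_out; auto.
   intros al p' H. assert (Uc' : Unf c (CROut [(a,rk)]) \/ Unf c (CUOut [(a,rk)])) by (destruct Uc; auto).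
   destruct (lts_out_fwd Uc' H) as (b & s & -> & Ib).
   destruct Ib as [E|[]]. injection E; intros; subst.
   exists b; split; auto. intros m s' Um Im. apply NI; eauto.
Qed.

Lemma TE1_stuck l m c d : Unf c (CIn l) -> Unf d (CROut m) -> ~ (exists a rk sk, In (a,rk) l /\ In (a,sk) m) -> bad ([],Some c) ([],Some d).
Proof. intros Uc Ud NI. apply stuck_bad.
 - eapply notone; [exact Uc|discriminate].
 - intro q; eapply notau_head; [exact Uc|intros; discriminate].
 - intro q; eapply notau_head; [exact Ud|intros; discriminate].
 - intros al p' q' H1 H2. destruct (lts_in_fwd Uc H1) as (b & s & -> & Ib).
   simpl in H2. destruct (lts_out_fwd (or_introl Ud) H2) as (b' & s' & E & Ib').
   injection E; intros; subst. apply NI; eauto.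
Qed.

Lemma TE1 n : forall l m c d, length l <= n -> Unf c (CIn l) -> Unf d (CROut m) ->
  (forall a rk sk, In (a,rk) l -> In (a,sk) m -> ~ compliant rk sk) -> bad ([],Some c) ([],Some d).
Proof. induction n as [|n IH]; intros l m c d Hn Uc Ud Hnc;
 (destruct (classic (exists a rk sk, In (a,rk) l /\ In (a,sk) m)) as [(a & rk & sk & I1 & I2)|NI];
  [|eapply TE1_stuck; eauto]).
 - destruct l; simpl in Hn; [destruct I1| lia].
 - pose proof (Hnc _ _ _ I1 I2) as NC. apply nc_bad in NC.
   destruct (step_in Uc I1) as (g1 & L1 & G1).
   destruct (step_rout Ud I2) as (g2 & L2 & G2).
   eapply red_bad. { apply red_base. eapply red_comm; [apply L1| apply L2]. }
   eapply reds_bad. { apply lift_bad; exact NC. }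
   destruct G1 as [->|(l' & -> & Il & Ll)]; [apply dead_none|].
   destruct G2 as [->|(m' & -> & Im & Lm)].
   { apply stuck_bad.
     - eapply notone; [apply unf_in|discriminate].
     - intro q; eapply notau_head; [apply unf_in|intros; discriminate].
     - intros q H; inversion H.
     - intros al p' q' _ H; inversion H. }
   eapply IH with (l := l') (m := m'); [lia| constructor | constructor |].
   intros a' rk' sk' J1 J2. eapply Hnc; eauto.
Qed.

Lemma TE2_stuck l m c d : Unf c (CROut l) -> Unf d (CIn m) -> ~ (exists a rk sk, In (a,rk) l /\ In (a,sk) m) -> bad ([],Some c) ([],Some d).
Proof. intros Uc Ud NI. apply stuck_bad.
 - eapply notone; [exact Uc|discriminate].
 - intro q; eapply notau_head; [exact Uc|intros; discriminate].
 - intro q; eapply notau_head; [exact Ud|intros; discriminate].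
 - intros al p' q' H1 H2. destruct (lts_out_fwd (or_introl Uc) H1) as (b & s & -> & Ib).
   simpl in H2. destruct (lts_in_fwd Ud H2) as (b' & s' & E & Ib').
   injection E; intros; subst. apply NI; eauto.
Qed.

Lemma TE2 n : forall l m c d, length l <= n -> Unf c (CROut l) -> Unf d (CIn m) ->
  (forall a rk sk, In (a,rk) l -> In (a,sk) m -> ~ compliant rk sk) -> bad ([],Some c) ([],Some d).
Proof. induction n as [|n IH]; intros l m c d Hn Uc Ud Hnc;
 (destruct (classic (exists a rk sk, In (a,rk) l /\ In (a,sk) m)) as [(a & rk & sk & I1 & I2)|NI];
  [|eapply TE2_stuck; eauto]).
 - destruct l; simpl in Hn; [destruct I1| lia].
 - pose proof (Hnc _ _ _ I1 I2) as NC. apply nc_bad in NC.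
   destruct (step_rout Uc I1) as (g1 & L1 & G1).
   destruct (step_in Ud I2) as (g2 & L2 & G2).
   eapply red_bad. { apply red_base. eapply red_comm; [apply L1| apply L2]. }
   eapply reds_bad. { apply lift_bad; exact NC. }
   destruct G1 as [->|(l' & -> & Il & Ll)]; [apply dead_none|].
   destruct G2 as [->|(m' & -> & Im & Lm)].
   { apply stuck_bad.
     - eapply notone; [apply unf_rout|discriminate].
     - intro q; eapply notau_head; [apply unf_rout|intros; discriminate].
     - intros q H; inversion H.
     - intros al p' q' _ H; inversion H. }
   eapply IH with (l := l') (m := m'); [lia| constructor | constructor |].
   intros a' rk' sk' J1 J2. eapply Hnc; eauto.
Qed.

Theorem lemma4 (rho sigma : ctr) :
  contract rho -> contract sigma -> compliant rho sigma ->
  is_one rho \/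
  (exists L M, rsum rho L /\ rsum sigma M /\
     exists al rk sk, In (al, rk) L /\ In (dual al, sk) M /\ compliant rk sk) \/
  (exists l m, uout rho l /\ isum sigma m /\
     forall a rk, In (a, rk) l -> exists sk, In (a, sk) m /\ compliant rk sk) \/
  (exists l m, isum rho l /\ uout sigma m /\
     forall a sk, In (a, sk) m -> exists rk, In (a, rk) l /\ compliant rk sk).
Proof.
 intros _ _ Hc. unfold compliant in Hc.
 destruct (classic (exists k, Unf rho k)) as [[k Uk]|NU].
 2:{ exfalso. refine (bad_nc _ _ _ Hc). apply client_dead.
     - simpl. unfold is_one. intro U; apply NU; eauto.
     - intros al p' H. apply NU. inversion H; subst; eauto.
     - intros q H. apply NU. inversion H; subst; eauto. }
 destruct k as [| l | l | l | n | n s].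
 - left. exact Uk.
 -
   destruct (classic (exists m, Unf sigma (CUOut m))) as [[m Um]|NUo].
   { right; right; right. exists l, m. split; [exact Uk|]. split; [left; exact Um|].
     intros a sk I. apply in_split in I as (m1 & m2 & ->).
     destruct (m1 ++ m2) eqn:E.
     - apply app_eq_nil in E as [-> ->]. eapply SC; [exact Uk| left; exact Um| exact Hc].
     - eapply SC; [exact Uk| left; apply unf_uout|].
       eapply compl_red; [exact Hc|]. apply red_base, red_tau_r. eapply tau_uout; [exact Um|]. rewrite E; discriminate. }
   destruct (classic (exists m, Unf sigma (CROut m))) as [[m Um]|NUr].
   { right; left. exists (map (fun p => (Nm (fst p), snd p)) l), (map (fun p => (CoNm (fst p), snd p)) m).
     split; [exists l; left; split; [exact Uk|reflexivity]|].
     split; [exists m; right; split; [left; exact Um| reflexivity]|].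
     destruct (classic (exists a rk sk, In (a,rk) l /\ In (a,sk) m /\ compliant rk sk)) as [(a & rk & sk & I1 & I2 & C)|N].
     - exists (Nm a), rk, sk. split; [|split; [|exact C]].
       + exact (in_map (fun p => (Nm (fst p), snd p)) _ (a,rk) I1).
       + exact (in_map (fun p => (CoNm (fst p), snd p)) _ (a,sk) I2).
     - exfalso. refine (bad_nc _ _ _ Hc). apply (TE1 (length l) l m); auto.
       intros a rk sk I1 I2 C. apply N; eauto 6. }
   exfalso. refine (bad_nc _ _ _ Hc). apply stuck_bad.
   + eapply notone; [exact Uk|discriminate].
   + intro q; eapply notau_head; [exact Uk|intros; discriminate].
   + intros q T. apply tau_inv in T as (c' & l1 & a & s & l2 & E & U & _). injection E; intros; subst. apply NUo; eauto.
   + intros al p' q' H1 H2. destruct (lts_in_fwd Uk H1) as (b & s & -> & _). simpl in H2.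
     apply lts_CoNm_rev in H2 as (m & s' & [U|U] & _); [apply NUr|apply NUo]; eauto.
 -
   destruct (classic (exists m, Unf sigma (CIn m))) as [[m Um]|NUi].
   { right; left. exists (map (fun p => (CoNm (fst p), snd p)) l), (map (fun p => (Nm (fst p), snd p)) m).
     split; [exists l; right; split; [left; exact Uk| reflexivity]|].
     split; [exists m; left; split; [exact Um|reflexivity]|].
     destruct (classic (exists a rk sk, In (a,rk) l /\ In (a,sk) m /\ compliant rk sk)) as [(a & rk & sk & I1 & I2 & C)|N].
     - exists (CoNm a), rk, sk. split; [|split; [|exact C]].
       + exact (in_map (fun p => (CoNm (fst p), snd p)) _ (a,rk) I1).
       + exact (in_map (fun p => (Nm (fst p), snd p)) _ (a,sk) I2).
     - exfalso. refine (bad_nc _ _ _ Hc). apply (TE2 (length l) l m); auto.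
       intros a rk sk I1 I2 C. apply N; eauto 6. }
   exfalso. refine (bad_nc _ _ _ Hc). apply client_out.
   + eapply notone; [exact Uk|discriminate].
   + intros al p' H. destruct (lts_out_fwd (or_introl Uk) H) as (b & s & -> & _). exists b; split; auto.
     intros m s' U; exfalso; apply NUi; eauto.
   + intro q; eapply notau_head; [exact Uk|intros; discriminate].
 -
   destruct l as [|[a0 r0] l'].
   { exfalso. refine (bad_nc _ _ _ Hc). apply client_dead.
     - eapply notone; [exact Uk|discriminate].
     - intros al p' H. destruct (lts_out_fwd (or_intror Uk) H) as (b & s & _ & []).
     - intros q T. apply tau_inv in T as (c' & l1 & a & s & l2 & E & U & _). injection E; intros; subst. udet.
       destruct l1; simpl in *; discriminate. }
   right; right; left.
   assert (K : forall a rk, In (a,rk) ((a0,r0)::l') -> exists m, Unf sigma (CIn m) /\ exists sk, In (a,sk) m /\ compliant rk sk).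
   { intros a rk I. apply in_split in I as (l1 & l2 & E). rewrite E in Uk.
     destruct (l1 ++ l2) eqn:E2.
     - apply app_eq_nil in E2 as [-> ->]. eapply CC; [left; exact Uk| exact Hc].
     - eapply CC; [left; apply unf_uout|]. eapply compl_red; [exact Hc|]. apply red_base, red_tau_l.
       eapply tau_uout; [exact Uk|]. rewrite E2; discriminate. }
   destruct (K a0 r0 (or_introl eq_refl)) as (m & Um & _).
   exists ((a0,r0)::l'), m. split; [left; exact Uk|]. split; [exact Um|].
   intros a rk I. destruct (K a rk I) as (m' & Um' & sk & Isk & C). udet. eauto.
 - exfalso; exact (Unf_head _ _ Uk).
 - exfalso; exact (Unf_head _ _ Uk).
Qed.
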